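(* Let $\rho\in\mathbb R$ and let $\mathbf b=\{b_n\}_{n\ge1}$ be an admissible sequence of real numbers. For every $\beta\in\mathbb R$ assume that the Dirichlet series $f_\beta(s)=\sum_{n\in\mathrm{supp}(\mathbf b)}n^{i\beta}b_nn^{-s}$ converges on $\mathbb H_\rho$. Then the family $\{f_\beta:\beta\in\mathbb R\}$ is linearly independent in the space $\mathrm{Hol}(\mathbb H_\rho)$ of holomorphic functions on $\mathbb H_\rho$.
   Context: $\mathbb H_\rho=\{\Re s>\rho\}$. A sequence $\mathbf b$ of real numbers is admissible if its support $\mathrm{supp}(\mathbf b)=\{n\in\mathbb N:b_n\ne0\}$ is an infinite subset of $\mathbb N$ closed under multiplication and there exist $p,q\in\mathrm{supp}(\mathbf b)\setminus\{1\}$ with $\gcd(p,q)=1$. *)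

(* Defs.v *)
From Stdlib Require Import Reals Arith.
From Coquelicot Require Import Coquelicot.
Open Scope R_scope.

Definition in_supp (b : nat -> R) (n : nat) : Prop := (1 <= n)%nat /\ b n <> 0.

(* Admissible sequence (b_n)_{n>=1}; the value b 0 is irrelevant. *)
Definition admissible (b : nat -> R) : Prop :=
  (forall N : nat, exists n, (N < n)%nat /\ in_supp b n) /\
  (forall m n, in_supp b m -> in_supp b n -> in_supp b (m * n)) /\
  (exists p q, in_supp b p /\ in_supp b q /\ p <> 1%nat /\ q <> 1%nat /\ Nat.gcd p q = 1%nat).

(* principal complex power n^w = exp(w log n) for a positive integer n *)
Definition npow (n : nat) (w : C) : C :=
  let l := ln (INR n) in
  (exp (Re w * l) * cos (Im w * l), exp (Re w * l) * sin (Im w * l)).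

(* n-th term of f_beta(s) = sum_{n in supp b} n^{i beta} b_n n^{-s}
   (terms outside the support vanish); indexed from n = 1 via k = n - 1. *)
Definition dterm (b : nat -> R) (beta : R) (s : C) (k : nat) : C :=
  let n := S k in
  if Req_EM_T (b n) 0 then 0%C
  else (npow n (0, beta) * RtoC (b n) * npow n (- s))%C.

Definition dconv (b : nat -> R) (beta : R) (s : C) : Prop :=
  ex_series (dterm b beta s).

Definition fbeta (b : nat -> R) (beta : R) (s : C) : C :=
  (Series (fun k => Re (dterm b beta s k)), Series (fun k => Im (dterm b beta s k))).

Fixpoint csum (k : nat) (a : nat -> C) : C :=
  match k with O => 0%C | S k' => (csum k' a + a k')%C end.

(* Main.v *)
Require Import Defs.
From Stdlib Require Import Reals Arith Lia Lra Psatz Classical ZArith.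
From Coquelicot Require Import Coquelicot.
Open Scope R_scope.

Fixpoint bmax (u : nat -> R) (n : nat) : R :=
  match n with O => Rabs (u O) | S m => Rmax (bmax u m) (Rabs (u (S m))) end.

Lemma bmax_ge u n k : (k <= n)%nat -> Rabs (u k) <= bmax u n.
Proof.
  induction n; intros H.
  - inversion H; subst; simpl; lra.
  - destruct (Nat.eq_dec k (S n)) as [->|Hne]; simpl.
    + apply Rmax_r.
    + eapply Rle_trans; [apply IHn; lia | apply Rmax_l].
Qed.

Lemma lim0_bounded u : is_lim_seq u 0 -> exists M, forall k, Rabs (u k) <= M.
Proof.
  intros H. apply is_lim_seq_spec in H.
  destruct (H (mkposreal 1 Rlt_0_1)) as [N HN]. simpl in HN.
  exists (Rmax 1 (bmax u N)). intros k.
  destruct (le_lt_dec k N).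
  - eapply Rle_trans; [apply (bmax_ge u N k); auto | apply Rmax_r].
  - specialize (HN k ltac:(lia)). rewrite Rminus_0_r in HN.
    eapply Rle_trans; [left; exact HN | apply Rmax_l].
Qed.

Lemma tele K n : sum_f_R0 (fun k => K / ((INR k + 1) * (INR k + 2))) n = K * (1 - / (INR n + 2)).
Proof.
  induction n.
  - simpl. field.
  - rewrite tech5, IHn, S_INR. assert (0 <= INR n) by apply pos_INR.
    field. repeat split; lra.
Qed.

Lemma exp_INR_mul t x : exp (INR t * x) = exp x ^ t.
Proof.
  induction t; simpl pow.
  - simpl. rewrite Rmult_0_l, exp_0; auto.
  - rewrite S_INR, Rmult_plus_distr_r, Rmult_1_l, exp_plus, IHt; ring.
Qed.

Lemma sq_bound X : 0 <= X -> / (X + 1) * / (X + 1) <= 2 * / ((X + 1) * (X + 2)).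
Proof.
  intros HX. rewrite Rinv_mult.
  assert (H1 : 0 < / (X + 1)) by (apply Rinv_0_lt_compat; lra).
  assert (H2 : / (X+1) <= 2 * / (X + 2)).
  { replace (2 * / (X + 2)) with (/ ((X + 2) / 2)) by (field; lra).
    apply Rinv_le_contravar; lra. }
  nra.
Qed.

Lemma dir_uniq (e : nat -> R) (s0 : R) :
  (forall t : nat, is_series (fun k => e k * exp (- (s0 + INR t) * ln (INR (S k)))) 0) ->
  forall N, e N = 0.
Proof.
  intros H.
  set (u := fun k => e k * exp (- s0 * ln (INR (S k)))).
  assert (Hu : is_lim_seq u 0).
  { apply ex_series_lim_0. exists 0. eapply is_series_ext; [|apply (H O)].
    intros k; unfold u; simpl; do 3 f_equal; ring. }
  destruct (lim0_bounded u Hu) as [M HM].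
  assert (HM0 : 0 <= M) by (eapply Rle_trans; [apply Rabs_pos| apply (HM O)]).
  intros N. induction N as [N IH] using (well_founded_induction lt_wf).
  set (A := INR (S N)).
  assert (HA : 1 <= A) by (unfold A; rewrite S_INR; pose proof (pos_INR N); lra).
  set (q := A / (A + 1)).
  assert (Hq0 : 0 <= q) by (unfold q; apply Rmult_le_pos; [lra| left; apply Rinv_0_lt_compat; lra]).
  assert (Hq1 : q < 1).
  { unfold q. apply (Rmult_lt_reg_r (A+1)); [lra|]. unfold Rdiv.
    rewrite Rmult_assoc, Rinv_l by lra. lra. }
  set (B := 2 * M * exp (s0 * ln A) * A ^ 2).
  assert (HB : 0 <= B).
  { unfold B. apply Rmult_le_pos; [|apply pow_le; lra].
    apply Rmult_le_pos; [lra| left; apply exp_pos]. }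
  assert (key : forall t, Rabs (e N) <= B * q ^ t).
  { intros t.
    set (sg := s0 + INR (t + 2)).
    set (w := fun k => e k * exp (- sg * ln (INR (S k))) * exp (sg * ln A)).
    assert (Hw : is_series w 0).
    { replace 0 with (0 * exp (sg * ln A)) by ring.
      apply is_series_scal_r. apply H. }
    assert (wN : w N = e N).
    { unfold w. fold A. rewrite Rmult_assoc, <- exp_plus.
      replace (- sg * ln A + sg * ln A) with 0 by ring. rewrite exp_0; ring. }
    assert (wlt : forall k, (k < N)%nat -> w k = 0).
    { intros k Hk. unfold w. rewrite (IH k Hk). ring. }
    set (g := fun k => B * q ^ t / ((INR k + 1) * (INR k + 2))).
    assert (gpos : forall k, 0 <= g k).
    { intros k. unfold g. pose proof (pos_INR k). apply Rmult_le_pos.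
      - apply Rmult_le_pos; [lra| apply pow_le; lra].
      - left; apply Rinv_0_lt_compat; nra. }
    assert (wbound : forall k, (N < k)%nat -> Rabs (w k) <= g k).
    { intros k Hk.
      set (X := INR k). assert (HX : 0 <= X) by apply pos_INR.
      assert (HXA : A + 1 <= X + 1).
      { unfold X, A. rewrite S_INR. apply Rplus_le_compat_r.
        replace (INR N + 1) with (INR (S N)) by (rewrite S_INR; ring). apply le_INR; lia. }
      set (r := A / (X + 1)).
      assert (Hr0 : 0 <= r) by (unfold r; apply Rmult_le_pos; [lra| left; apply Rinv_0_lt_compat; lra]).
      assert (Hrq : r <= q).
      { unfold r, q. apply Rmult_le_compat_l; [lra|]. apply Rinv_le_contravar; lra. }
      assert (Ew : w k = u k * exp (s0 * ln A) * r ^ (t + 2)).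
      { assert (Er : r = exp (ln A - ln (INR (S k)))).
        { unfold r, Rdiv, Rminus. rewrite exp_plus, exp_Ropp, !exp_ln; try lra.
          - unfold X. rewrite S_INR. reflexivity.
          - rewrite S_INR; fold X; lra. }
        unfold w, u. rewrite !Rmult_assoc. f_equal.
        rewrite Er, <- exp_INR_mul, <- !exp_plus. f_equal. unfold sg.
        rewrite plus_INR. simpl (INR 2). ring. }
      rewrite Ew. rewrite !Rabs_mult.
      rewrite (Rabs_right (exp _)) by (left; apply exp_pos).
      rewrite (Rabs_right (r ^ _)) by (apply Rle_ge, pow_le; lra).
      rewrite pow_add.
      assert (Hrt : r ^ t <= q ^ t) by (apply pow_incr; lra).
      assert (Hr2 : r ^ 2 <= A ^ 2 * (2 * / ((X + 1) * (X + 2)))).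
      { unfold r. unfold Rdiv. simpl. rewrite !Rmult_1_r.
        pose proof (sq_bound X HX).
        replace (A * / (X + 1) * (A * / (X + 1))) with (A * A * (/ (X+1) * / (X+1))) by ring.
        apply Rmult_le_compat_l; nra. }
      assert (Hrt0 : 0 <= r ^ t) by (apply pow_le; lra).
      assert (Hr20 : 0 <= r ^ 2) by (apply pow_le; lra).
      assert (He0 : 0 < exp (s0 * ln A)) by apply exp_pos.
      assert (Hq0t : 0 <= q ^ t) by (apply pow_le; lra).
      unfold g, B. fold X.
      apply Rle_trans with (M * exp (s0 * ln A) * (q ^ t * (A ^ 2 * (2 * / ((X + 1) * (X + 2)))))).
      + apply Rmult_le_compat.
        * apply Rmult_le_pos; [apply Rabs_pos| lra].
        * apply Rmult_le_pos; lra.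
        * apply Rmult_le_compat_r; [lra| apply HM].
        * apply Rmult_le_compat; lra.
      + unfold Rdiv. right; ring. }
    assert (partial : forall m, Rabs (sum_f_R0 w (N + m) - e N) <= sum_f_R0 g (N + m)).
    { assert (sum0 : forall n, (n < N)%nat -> sum_f_R0 w n = 0).
      { induction n; intros Hn; simpl.
        - apply wlt; lia.
        - rewrite IHn by lia. rewrite wlt by lia. ring. }
      assert (gsum0 : forall n, 0 <= sum_f_R0 g n).
      { intros n. apply cond_pos_sum. exact gpos. }
      induction m.
      - rewrite Nat.add_0_r. destruct N as [|N'].
        + simpl. rewrite wN. rewrite Rminus_diag, Rabs_R0. apply gpos.
        + rewrite tech5, sum0 by lia. rewrite wN.
          replace (0 + e (S N') - e (S N')) with 0 by ring. rewrite Rabs_R0. apply gsum0.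
      - rewrite Nat.add_succ_r, !tech5.
        replace (sum_f_R0 w (N + m) + w (S (N + m)) - e N)
          with ((sum_f_R0 w (N + m) - e N) + w (S (N + m))) by ring.
        eapply Rle_trans; [apply Rabs_triang|].
        apply Rplus_le_compat; [exact IHm| apply wbound; lia]. }
    assert (hsum : forall n, sum_f_R0 g n <= B * q ^ t).
    { intros n. unfold g. rewrite tele.
      assert (0 <= B * q ^ t) by (apply Rmult_le_pos; [lra| apply pow_le; lra]).
      assert (0 < / (INR n + 2)) by (apply Rinv_0_lt_compat; pose proof (pos_INR n); lra).
      nra. }
    apply is_series_Reals in Hw.
    destruct (Rle_or_lt (Rabs (e N)) (B * q ^ t)) as [Hle|Hgt]; [exact Hle|].
    exfalso.
    destruct (Hw (Rabs (e N) - B * q ^ t)) as [n0 Hn0]; [lra|].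
    specialize (Hn0 (N + n0)%nat ltac:(lia)). unfold R_dist in Hn0.
    rewrite Rminus_0_r in Hn0.
    specialize (partial n0). specialize (hsum (N + n0)%nat).
    assert (Rabs (e N) <= Rabs (sum_f_R0 w (N + n0) - e N) + Rabs (sum_f_R0 w (N + n0))).
    { replace (e N) with (- (sum_f_R0 w (N + n0) - e N) + sum_f_R0 w (N + n0)) at 1 by ring.
      eapply Rle_trans; [apply Rabs_triang|]. rewrite Rabs_Ropp. lra. }
    lra. }
  destruct (Req_dec (e N) 0) as [E|E]; [exact E|]. exfalso.
  assert (Hp : 0 < Rabs (e N)) by (apply Rabs_pos_lt; exact E).
  destruct (Req_dec B 0) as [EB|EB].
  - specialize (key O). rewrite EB in key. lra.
  - assert (HBp : 0 < B) by lra.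
    destruct (pow_lt_1_zero q ltac:(rewrite Rabs_right; lra) (Rabs (e N) / B)) as [t Ht].
    { apply Rmult_lt_0_compat; [lra| apply Rinv_0_lt_compat; lra]. }
    specialize (Ht t (le_n t)). specialize (key t).
    rewrite Rabs_right in Ht by (apply Rle_ge, pow_le; lra).
    apply (Rmult_lt_compat_l B) in Ht; [|lra].
    replace (B * (Rabs (e N) / B)) with (Rabs (e N)) in Ht by (field; lra).
    lra.
Qed.

Lemma Re_sum_n (a : nat -> C) n : Re (sum_n a n) = sum_n (fun k => Re (a k)) n.
Proof.
  induction n.
  - rewrite !sum_O. reflexivity.
  - rewrite !sum_Sn, <- IHn. reflexivity.
Qed.
Lemma Im_sum_n (a : nat -> C) n : Im (sum_n a n) = sum_n (fun k => Im (a k)) n.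
Proof.
  induction n.
  - rewrite !sum_O. reflexivity.
  - rewrite !sum_Sn, <- IHn. reflexivity.
Qed.

Lemma Re_series (a : nat -> C) l : is_series a l -> is_series (fun k => Re (a k)) (Re l).
Proof.
  intros H P [eps HP].
  assert (H1 : eventually (fun n => P (Re (sum_n a n)))).
  { apply (H (fun z : C => P (Re z))). exists eps. intros y [Hy1 Hy2]. apply HP. exact Hy1. }
  destruct H1 as [N HN]. exists N. intros n Hn. rewrite <- Re_sum_n. apply HN; auto.
Qed.
Lemma Im_series (a : nat -> C) l : is_series a l -> is_series (fun k => Im (a k)) (Im l).
Proof.
  intros H P [eps HP].
  assert (H1 : eventually (fun n => P (Im (sum_n a n)))).
  { apply (H (fun z : C => P (Im z))). exists eps. intros y [Hy1 Hy2]. apply HP. exact Hy2. }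
  destruct H1 as [N HN]. exists N. intros n Hn. rewrite <- Im_sum_n. apply HN; auto.
Qed.

Lemma csum_ext k (f g : nat -> C) : (forall j, (j < k)%nat -> f j = g j) -> csum k f = csum k g.
Proof.
  induction k; intros H; simpl; auto.
  rewrite IHk by (intros; apply H; lia). rewrite H by lia. reflexivity.
Qed.

Lemma csum_zero k (f : nat -> C) : (forall j, (j < k)%nat -> f j = 0%C) -> csum k f = 0%C.
Proof.
  induction k; intros H; simpl; auto.
  rewrite IHk by (intros; apply H; lia). rewrite H by lia. ring.
Qed.

Lemma csum_lin k (f g : nat -> C) (x : C) : csum k (fun j => f j - x * g j)%C = (csum k f - x * csum k g)%C.
Proof. induction k; simpl. ring. rewrite IHk. ring. Qed.

Lemma csum_mul_r k (f : nat -> C) (z : C) : csum k (fun j => f j * z)%C = (csum k f * z)%C.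
Proof. induction k; simpl. ring. rewrite IHk. ring. Qed.

Lemma is_series_zero : is_series (fun _ : nat => 0) 0.
Proof.
  apply is_series_Reals. intros eps Heps. exists O. intros n _.
  assert (E : sum_f_R0 (fun _ => 0) n = 0).
  { induction n; simpl; auto. rewrite IHn; ring. }
  unfold R_dist. rewrite E, Rminus_0_r, Rabs_R0. exact Heps.
Qed.

Lemma lin_series K (c : nat -> C) (d : nat -> nat -> C) :
  (forall j, (j < K)%nat -> ex_series (fun k => Re (d j k)) /\ ex_series (fun k => Im (d j k))) ->
  is_series (fun k => Re (csum K (fun j => c j * d j k)%C))
     (Re (csum K (fun j => c j * (Series (fun k => Re (d j k)), Series (fun k => Im (d j k))))%C)) /\
  is_series (fun k => Im (csum K (fun j => c j * d j k)%C))
     (Im (csum K (fun j => c j * (Series (fun k => Re (d j k)), Series (fun k => Im (d j k))))%C)).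
Proof.
  induction K; intros H.
  - simpl. split; (apply is_series_ext with (fun _ => 0); [intros; reflexivity| apply is_series_zero]).
  - destruct IHK as [IR II]; [intros; apply H; lia|].
    destruct (H K ltac:(lia)) as [HR HI].
    apply Series_correct in HR. apply Series_correct in HI.
    set (SR := Series (fun k => Re (d K k))) in *.
    set (SI := Series (fun k => Im (d K k))) in *.
    split.
    + pose proof (is_series_plus _ _ _ _ IR (is_series_minus _ _ _ _ (is_series_scal (Re (c K)) _ _ HR) (is_series_scal (Im (c K)) _ _ HI))) as Hs.
      eapply is_series_ext in Hs.
      * replace (Re (csum (S K) (fun j => c j * (Series (fun k => Re (d j k)), Series (fun k => Im (d j k))))%C)) with
         (plus (Re (csum K (fun j => c j * (Series (fun k => Re (d j k)), Series (fun k => Im (d j k))))%C))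
           (plus (scal (Re (c K)) SR) (opp (scal (Im (c K)) SI)))).
        exact Hs.
        simpl. unfold plus, opp, scal; simpl. unfold SR, SI. change mult with Rmult. unfold Re, Im. ring.
      * intros n. simpl. unfold plus, opp, scal; simpl. change mult with Rmult. unfold Re, Im. ring.
    + pose proof (is_series_plus _ _ _ _ II (is_series_plus _ _ _ _ (is_series_scal (Re (c K)) _ _ HI) (is_series_scal (Im (c K)) _ _ HR))) as Hs.
      eapply is_series_ext in Hs.
      * replace (Im (csum (S K) (fun j => c j * (Series (fun k => Re (d j k)), Series (fun k => Im (d j k))))%C)) with
         (plus (Im (csum K (fun j => c j * (Series (fun k => Re (d j k)), Series (fun k => Im (d j k))))%C))
           (plus (scal (Re (c K)) SI) (scal (Im (c K)) SR))).
        exact Hs.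
        simpl. unfold plus, scal; simpl. unfold SR, SI. change mult with Rmult. unfold Re, Im. ring.
      * intros n. simpl. unfold plus, scal; simpl. change mult with Rmult. unfold Re, Im. ring.
Qed.

Lemma INR_pos1 n : (1 <= n)%nat -> 0 < INR n.
Proof. intros H. apply lt_0_INR. lia. Qed.

Lemma npow_mul m n w : (1 <= m)%nat -> (1 <= n)%nat -> npow (m * n) w = (npow m w * npow n w)%C.
Proof.
  intros Hm Hn. unfold npow. rewrite mult_INR, ln_mult by (apply INR_pos1; auto).
  apply injective_projections; simpl;
  rewrite !Rmult_plus_distr_l, exp_plus; try rewrite cos_plus; try rewrite sin_plus; ring.
Qed.

Lemma npow_1 w : npow 1 w = 1%C.
Proof.
  unfold npow. simpl INR. rewrite ln_1, !Rmult_0_r, exp_0, cos_0, sin_0.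
  apply injective_projections; simpl; ring.
Qed.

Lemma npow_pow p a w : (1 <= p)%nat -> npow (p ^ a) w = Cpow (npow p w) a.
Proof.
  intros Hp. induction a.
  - simpl. apply npow_1.
  - simpl Nat.pow. rewrite npow_mul; auto.
    + rewrite IHa. reflexivity.
    + assert (p ^ a <> 0)%nat by (apply Nat.pow_nonzero; lia). lia.
Qed.

Lemma npow_real n sg : npow n (- (sg, 0))%C = RtoC (exp (- sg * ln (INR n))).
Proof.
  unfold npow. apply injective_projections; simpl;
  rewrite ?Ropp_0, ?Rmult_0_l, ?cos_0, ?sin_0; ring.
Qed.

Lemma npow_unit n beta : npow n (0, beta) = (cos (beta * ln (INR n)), sin (beta * ln (INR n))).
Proof.
  unfold npow. simpl. rewrite Rmult_0_l, exp_0. apply injective_projections; simpl; ring.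
Qed.

Lemma npow_unit_nz n beta : npow n (0, beta) <> 0%C.
Proof.
  rewrite npow_unit. intros H.
  assert (H1 := f_equal fst H). assert (H2 := f_equal snd H). simpl in H1, H2.
  pose proof (sin2_cos2 (beta * ln (INR n))). unfold Rsqr in *. rewrite H1, H2 in *. lra.
Qed.

Lemma angle x y : cos x = cos y -> sin x = sin y -> exists m : Z, x - y = 2 * IZR m * PI.
Proof.
  intros Hc Hs.
  assert (H1 : cos (x - y) = 1).
  { rewrite cos_minus, Hc, Hs. pose proof (sin2_cos2 y). unfold Rsqr in *. lra. }
  replace (x - y) with (2 * ((x - y) / 2)) in H1 by field.
  rewrite cos_2a_sin in H1.
  assert (H2 : sin ((x - y) / 2) = 0) by nra.
  destruct (sin_eq_0_0 _ H2) as [m Hm]. exists m. lra.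
Qed.

Lemma coprime_pow p q M : Nat.gcd p q = 1%nat -> Nat.divide p (q ^ M) -> Nat.divide p 1.
Proof.
  intros Hg. induction M; simpl; auto.
  intros H. apply IHM. apply (Nat.gauss p q); auto.
Qed.

Lemma Cmult_reg (z x : C) : z <> 0%C -> (x * z)%C = 0%C -> x = 0%C.
Proof.
  intros Hz H. replace x with (x * z * / z)%C by (rewrite <- Cmult_assoc, Cinv_r, Cmult_1_r by exact Hz; reflexivity). rewrite H. ring.
Qed.

Lemma elim_w k (c z w : nat -> C) :
  (forall a b, csum (S k) (fun j => c j * Cpow (z j) a * Cpow (w j) b)%C = 0%C) ->
  forall a b, csum k (fun j => c j * (w j - w k) * Cpow (z j) a * Cpow (w j) b)%C = 0%C.
Proof.
  intros H a b.
  assert (E : (csum (S k) (fun j => c j * Cpow (z j) a * Cpow (w j) (S b))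
     - w k * csum (S k) (fun j => c j * Cpow (z j) a * Cpow (w j) b))%C = 0%C)
    by (rewrite (H a (S b)), (H a b); ring).
  rewrite <- E. cbn [csum].
  rewrite (csum_ext k _ (fun j => c j * Cpow (z j) a * Cpow (w j) (S b) - w k * (c j * Cpow (z j) a * Cpow (w j) b))%C).
  - rewrite csum_lin. simpl Cpow. ring.
  - intros j _. simpl Cpow. ring.
Qed.

Lemma elim_z k (c z w : nat -> C) :
  (forall a b, csum (S k) (fun j => c j * Cpow (z j) a * Cpow (w j) b)%C = 0%C) ->
  forall a b, csum k (fun j => c j * (z j - z k) * Cpow (z j) a * Cpow (w j) b)%C = 0%C.
Proof.
  intros H a b.
  assert (E : (csum (S k) (fun j => c j * Cpow (z j) (S a) * Cpow (w j) b)
     - z k * csum (S k) (fun j => c j * Cpow (z j) a * Cpow (w j) b))%C = 0%C)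
    by (rewrite (H (S a) b), (H a b); ring).
  rewrite <- E. cbn [csum].
  rewrite (csum_ext k _ (fun j => c j * Cpow (z j) (S a) * Cpow (w j) b - z k * (c j * Cpow (z j) a * Cpow (w j) b))%C).
  - rewrite csum_lin. simpl Cpow. ring.
  - intros j _. simpl Cpow. ring.
Qed.

Lemma Csub_nz (x y : C) : x <> y -> (x - y)%C <> 0%C.
Proof. intros H E. apply H. replace x with (x - y + y)%C by ring. rewrite E. ring. Qed.

Lemma vdm k : forall (c z w : nat -> C),
  (forall a b, csum k (fun j => c j * Cpow (z j) a * Cpow (w j) b)%C = 0%C) ->
  (forall i j, (i < k)%nat -> (j < k)%nat -> z i = z j -> w i = w j -> i = j) ->
  forall m, (m < k)%nat -> c m = 0%C.
Proof.
  induction k; intros c z w H D m Hm; [lia|].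
  assert (Hlt : forall m0, (m0 < k)%nat -> c m0 = 0%C).
  { intros m0 Hm0. destruct (classic (z m0 = z k)) as [Ez|Ez].
    - assert (Ew : w m0 <> w k) by (intros Ew; specialize (D m0 k ltac:(lia) ltac:(lia) Ez Ew); lia).
      apply (Cmult_reg (w m0 - w k)); [apply Csub_nz; exact Ew|].
      apply (IHk (fun j => c j * (w j - w k))%C z w).
      + apply elim_w. exact H.
      + intros i j Hi Hj. apply D; lia.
      + exact Hm0.
    - apply (Cmult_reg (z m0 - z k)); [apply Csub_nz; exact Ez|].
      apply (IHk (fun j => c j * (z j - z k))%C z w).
      + apply elim_z. exact H.
      + intros i j Hi Hj. apply D; lia.
      + exact Hm0. }
  destruct (Nat.eq_dec m k) as [->|Hne]; [|apply Hlt; lia].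
  pose proof (H O O) as H0. cbn [csum] in H0.
  assert (HZ : csum k (fun j => c j * Cpow (z j) 0 * Cpow (w j) 0)%C = 0%C) by (apply csum_zero; intros j Hj; rewrite Hlt by exact Hj; ring). rewrite HZ in H0.
  simpl Cpow in H0. rewrite <- H0. ring.
Qed.

Lemma ln_pos_nat p : (2 <= p)%nat -> 0 < ln (INR p).
Proof.
  intros H. rewrite <- ln_1. apply ln_increasing; [lra|].
  replace 1 with (INR 1) by reflexivity. apply lt_INR. lia.
Qed.

Lemma INR_abs_nat m : INR (Z.abs_nat m) = Rabs (IZR m).
Proof. rewrite INR_IZR_INZ, Zabs2Nat.id_abs, abs_IZR. reflexivity. Qed.

Lemma distinct_beta (p q : nat) (b1 b2 : R) :
  (2 <= p)%nat -> (2 <= q)%nat -> Nat.gcd p q = 1%nat ->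
  npow p (0, b1) = npow p (0, b2) -> npow q (0, b1) = npow q (0, b2) -> b1 = b2.
Proof.
  intros Hp Hq Hg E1 E2. rewrite !npow_unit in E1, E2.
  assert (A1 := f_equal fst E1). assert (B1 := f_equal snd E1).
  assert (A2 := f_equal fst E2). assert (B2 := f_equal snd E2). simpl in A1, B1, A2, B2.
  destruct (angle _ _ A1 B1) as [m Hm]. destruct (angle _ _ A2 B2) as [n Hn].
  set (Lp := ln (INR p)) in *. set (Lq := ln (INR q)) in *.
  assert (HLp : 0 < Lp) by (apply ln_pos_nat; auto).
  assert (HLq : 0 < Lq) by (apply ln_pos_nat; auto).
  destruct (Req_dec b1 b2) as [|Hne]; [assumption|]. exfalso.
  assert (Hn0 : n <> 0%Z).
  { intros ->. simpl in Hn. assert ((b1 - b2) * Lq = 0) by lra.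
    apply Rmult_integral in H. destruct H; lra. }
  assert (Heq : IZR m * Lq = IZR n * Lp).
  { pose proof PI_RGT_0. apply Rmult_eq_reg_r with (2 * PI); [|lra]. nra. }
  assert (Heq2 : INR (Z.abs_nat m) * Lq = INR (Z.abs_nat n) * Lp).
  { rewrite !INR_abs_nat. rewrite <- (Rabs_right Lq), <- (Rabs_right Lp) by lra.
    rewrite <- !Rabs_mult, Heq. reflexivity. }
  unfold Lp, Lq in Heq2.
  rewrite <- !ln_pow in Heq2 by (apply lt_0_INR; lia).
  apply ln_inv in Heq2; try (apply pow_lt; apply lt_0_INR; lia).
  rewrite <- !pow_INR in Heq2. apply INR_eq in Heq2.
  assert (Hd : Nat.divide p (q ^ Z.abs_nat m)).
  { rewrite Heq2. destruct (Z.abs_nat n) as [|N] eqn:EN; [lia|].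
    exists (p ^ N)%nat. simpl. lia. }
  apply coprime_pow in Hd; auto. apply Nat.divide_1_r in Hd. lia.
Qed.

Lemma pow_ge1 p a : (1 <= p)%nat -> (1 <= p ^ a)%nat.
Proof. intros H. assert (p ^ a <> 0)%nat by (apply Nat.pow_nonzero; lia). lia. Qed.

Theorem proposition5p5 (rho : R) (b : nat -> R) :
  admissible b ->
  (forall (beta : R) (s : C), rho < Re s -> dconv b beta s) ->
  forall (k : nat) (beta : nat -> R) (c : nat -> C),
    (forall i j, (i < k)%nat -> (j < k)%nat -> beta i = beta j -> i = j) ->
    (forall s : C, rho < Re s -> csum k (fun j => (c j * fbeta b (beta j) s)%C) = 0%C) ->
    forall j, (j < k)%nat -> c j = 0%C.
Proof.
  intros [Hinf [Hmul [p [q [Hp [Hq [Hp1 [Hq1 Hg]]]]]]]] Hconv k beta c Hinj Hsum.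
  set (P := fun n => csum k (fun j => c j * npow n (0, beta j))%C).
  set (s0 := Rabs rho + 1).
  set (E := fun m : nat => if Req_EM_T (b (S m)) 0 then RtoC 0 else (P (S m) * RtoC (b (S m)))%C).
  assert (Eid : forall sg m, csum k (fun j => c j * dterm b (beta j) (sg, 0) m)%C
                  = (E m * RtoC (exp (- sg * ln (INR (S m)))))%C).
  { intros sg m. unfold dterm, E. cbv zeta. destruct (Req_EM_T (b (S m)) 0).
    - rewrite csum_zero by (intros; ring). ring.
    - rewrite (csum_ext k _ (fun j => c j * npow (S m) (0, beta j) * (RtoC (b (S m)) * npow (S m) (- (sg,0))))%C)
        by (intros; ring).
      rewrite csum_mul_r, npow_real. unfold P. ring. }
  assert (Hser : forall t : nat,
     is_series (fun m => Re (E m) * exp (- (s0 + INR t) * ln (INR (S m)))) 0 /\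
     is_series (fun m => Im (E m) * exp (- (s0 + INR t) * ln (INR (S m)))) 0).
  { intros t. set (sg := s0 + INR t).
    assert (Hs : rho < Re (sg, 0)).
    { simpl. unfold sg, s0. pose proof (pos_INR t). pose proof (Rle_abs rho). lra. }
    destruct (lin_series k c (fun j m => dterm b (beta j) (sg, 0) m)) as [LR LI].
    { intros j _. destruct (Hconv (beta j) (sg, 0) Hs) as [l Hl].
      split; eexists; [apply Re_series | apply Im_series]; exact Hl. }
    assert (Hz : csum k (fun j => c j * (Series (fun m => Re (dterm b (beta j) (sg, 0) m)),
                                         Series (fun m => Im (dterm b (beta j) (sg, 0) m))))%C = 0%C)
      by exact (Hsum (sg, 0) Hs).
    rewrite Hz in LR, LI. change (Re 0%C) with 0 in LR. change (Im 0%C) with 0 in LI.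
    split.
    - eapply is_series_ext; [|exact LR]. intros m. cbv beta. rewrite Eid. unfold Re, Im. simpl. ring.
    - eapply is_series_ext; [|exact LI]. intros m. cbv beta. rewrite Eid. unfold Re, Im. simpl. ring. }
  assert (HE : forall m, E m = 0%C).
  { intros m. apply injective_projections.
    - change (Re (E m) = 0). apply (dir_uniq (fun m => Re (E m)) s0). intros t. apply (Hser t).
    - change (Im (E m) = 0). apply (dir_uniq (fun m => Im (E m)) s0). intros t. apply (Hser t). }
  assert (HP : forall n, in_supp b n -> P n = 0%C).
  { intros n [Hn1 Hbn]. destruct n as [|m]; [lia|]. specialize (HE m). unfold E in HE.
    destruct (Req_EM_T (b (S m)) 0); [contradiction|].
    apply (Cmult_reg (RtoC (b (S m)))); auto.
    intros H. apply Hbn. apply (f_equal fst) in H. simpl in H. exact H. }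
  set (z := fun j => npow p (0, beta j)). set (w := fun j => npow q (0, beta j)).
  assert (Hp2 : (2 <= p)%nat) by (destruct Hp; lia).
  assert (Hq2 : (2 <= q)%nat) by (destruct Hq; lia).
  assert (supp_pow : forall r a, in_supp b r -> in_supp b (r ^ S a)%nat).
  { intros r a Hr. induction a.
    - simpl. rewrite Nat.mul_1_r. auto.
    - change (r ^ S (S a))%nat with (r * r ^ S a)%nat. apply Hmul; auto. }
  assert (Hvan : forall a bb, csum k (fun j => (c j * z j * w j) * Cpow (z j) a * Cpow (w j) bb)%C = 0%C).
  { intros a bb. assert (Hin : in_supp b (p ^ S a * q ^ S bb)%nat) by (apply Hmul; apply supp_pow; auto).
    rewrite <- (HP _ Hin). unfold P. apply csum_ext. intros j _.
    rewrite npow_mul by (apply pow_ge1; lia). rewrite !npow_pow by lia.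
    unfold z, w. simpl Cpow. ring. }
  assert (Hdist : forall i j, (i < k)%nat -> (j < k)%nat -> z i = z j -> w i = w j -> i = j).
  { intros i j Hi Hj Ez Ew. apply Hinj; auto. apply (distinct_beta p q); auto. }
  intros j Hj.
  pose proof (vdm k (fun j => c j * z j * w j)%C z w Hvan Hdist j Hj) as H0.
  apply (Cmult_reg (z j)); [apply npow_unit_nz|].
  apply (Cmult_reg (w j)); [apply npow_unit_nz|]. exact H0.
Qed.
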